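(* Let $\mathcal{D}$ be a joint distribution of $(X, A, Y)$ with $A, Y \in \{0,1\}$ and $0 < \Pr_{\mathcal{D}}(A=0) < 1$. Let $g:\mathcal{X}\to\mathcal{Z}$ be a measurable encoder with $\mathcal{Z}\subseteq\mathbb{R}^{d}$ and $\sup_{z\in\mathcal{Z}}\|z\|\le R$, and let $Z=g(X)$. Let $\mathcal{F}_A$ be the set of all measurable functions $\mathcal{Z}\to\{0,1\}$. Define $\delta_{Y\mid A} := |\Pr_{\mathcal{D}_0}(Y=1) - \Pr_{\mathcal{D}_1}(Y=1)|$. Then for every measurable $h:\mathcal{Z}\to[0,1]$ with $\|h\|_L\le C$, $$\varepsilon_{Y\mid A=0}(h\circ g) + \varepsilon_{Y\mid A=1}(h\circ g) \;\ge\; \delta_{Y\mid A} - C\cdot W_1(g_\sharp\mathcal{D}_0, g_\sharp\mathcal{D}_1) \;\ge\; \delta_{Y\mid A} - 2RC\cdot \mathrm{Adv}_{\mathcal{D}}(\mathcal{F}_A).$$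
   Context: $\mathcal{D}_a$ denotes the conditional distribution of $\mathcal{D}$ given $A=a$. For a measurable map $g$, $g_\sharp\mathcal{D}$ is the pushforward $E'\mapsto \mathcal{D}(\{x: g(x)\in E'\})$; $g_\sharp\mathcal{D}_a$ is the law of $Z=g(X)$ given $A=a$. For distributions $P,P'$ on a metric space $\Omega$, $W_1(P,P') := \sup_{\|f\|_L\le 1}\left|\int f\,dP - \int f\,dP'\right|$, the supremum over real-valued $1$-Lipschitz functions, where $\|f\|_L$ is the Lipschitz constant ($\mathcal{Z}$ carries the Euclidean metric). The predictor $h(z)$ is interpreted as the predicted probability that $Y=1$, and the conditional cross-entropy error is $\varepsilon_{Y\mid A=a}(h\circ g) := \mathbb{E}_{\mathcal{D}}\big[-Y\ln h(g(X)) - (1-Y)\ln(1-h(g(X))) \,\big|\, A=a\big]$. The advantage of a class $\mathcal{F}_A$ of functions $\mathcal{Z}\to\{0,1\}$ is $\mathrm{Adv}_{\mathcal{D}}(\mathcal{F}_A) := \sup_{f\in\mathcal{F}_A}\left|\Pr_{\mathcal{D}_1}(f(Z)=1) - \Pr_{\mathcal{D}_0}(f(Z)=1)\right|$. *)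

(* Defs.v *)
From HB Require Import structures.
From mathcomp Require Import all_boot all_order all_algebra.
From mathcomp Require Import all_classical all_reals all_analysis.
Set Implicit Arguments. Unset Strict Implicit. Unset Printing Implicit Defensive.
Import Order.TTheory GRing.Theory Num.Theory.
Local Open Scope classical_set_scope.
Local Open Scope ring_scope.

Section fair_defs.
Context {R : realType}.

(* Euclidean norm and distance on R^n, represented as n.-tuple R
   (with its product sigma-algebra, i.e. the Borel sigma-algebra of R^n). *)
Definition enorm (n : nat) (z : n.-tuple R) : R :=
  Num.sqrt (\sum_(i < n) (tnth z i) ^+ 2).
Definition edist (n : nat) (z w : n.-tuple R) : R :=
  Num.sqrt (\sum_(i < n) (tnth z i - tnth w i) ^+ 2).

Definition lipschitz_with (n : nat) (Zs : set (n.-tuple R)) (L : R)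
  (f : n.-tuple R -> R) : Prop :=
  forall z w, Zs z -> Zs w -> `|f z - f w| <= L * edist z w.

Definition cond_distr d (T : measurableType d) (P : set T -> \bar R)
  (A : T -> bool) (a : bool) : set T -> \bar R :=
  fun E => (P (E `&` A @^-1` [set a]) * ((fine (P (A @^-1` [set a])))^-1)%:E)%E.

(* binary cross-entropy loss of predicted probability p for label y,
   with the convention -ln 0 = +oo *)
Definition xent (p : R) (y : bool) : \bar R :=
  if y then (if 0 < p then (- ln p)%:E else +oo%E)
  else (if p < 1 then (- ln (1 - p))%:E else +oo%E).

(* 1-Wasserstein distance (Kantorovich-Rubinstein dual form) between two
   distributions on Zs ⊆ R^n *)
Definition W1 (n : nat) (Zs : set (n.-tuple R))
  (mu nu : set (n.-tuple R) -> \bar R) : \bar R :=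
  ereal_sup [set `| (\int[mu]_z (f z)%:E - \int[nu]_z (f z)%:E)%E |%E
            | f in [set f : n.-tuple R -> R |
                     measurable_fun setT f /\ lipschitz_with Zs 1 f]].

Definition Adv (n : nat) (mu0 mu1 : set (n.-tuple R) -> \bar R) : \bar R :=
  ereal_sup [set `| (mu1 (f @^-1` [set true]) - mu0 (f @^-1` [set true]))%E |%E
            | f in [set f : n.-tuple R -> bool | measurable_fun setT f]].

End fair_defs.

(* Main.v *)
Require Import Defs.
From HB Require Import structures.
From mathcomp Require Import all_boot all_order all_algebra.
From mathcomp Require Import all_classical all_reals all_analysis.
From mathcomp Require Import lra measurable_realfun.
Import Order.TTheory GRing.Theory Num.Theory.
Local Open Scope classical_set_scope.
Local Open Scope ring_scope.

Lemma enorm_ge0 (R : realType) n (z : n.-tuple R) : 0 <= enorm z.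
Proof. exact: sqrtr_ge0. Qed.

Lemma edist_le (R : realType) n (z w : n.-tuple R) (Rb : R) :
  enorm z <= Rb -> enorm w <= Rb -> Defs.edist z w <= 2 * Rb.
Proof.
rewrite /enorm /Defs.edist => hz hw.
set sz := \sum_(i < n) _ in hz; set sw := \sum_(i < n) _ in hw.
set sd := \sum_(i < n) _.
have sz0 : 0 <= sz by apply: sumr_ge0 => i _; exact: sqr_ge0.
have sw0 : 0 <= sw by apply: sumr_ge0 => i _; exact: sqr_ge0.
have sd0 : 0 <= sd by apply: sumr_ge0 => i _; exact: sqr_ge0.
have hsd : sd <= 2 * sz + 2 * sw.
  rewrite /sd /sz /sw !mulr_sumr -big_split /=; apply: ler_sum => i _.
  have := sqr_ge0 (tnth z i + tnth w i); nra.
have ez := sqr_sqrtr sz0; have ew := sqr_sqrtr sw0; have ed := sqr_sqrtr sd0.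
have gz := sqrtr_ge0 sz; have gw := sqrtr_ge0 sw; have gd := sqrtr_ge0 sd.
set a := Num.sqrt sz in hz ez gz; set b := Num.sqrt sw in hw ew gw.
set c := Num.sqrt sd in ed gd *.
rewrite -ez -ew -ed in hsd.
have : a ^+ 2 <= Rb ^+ 2 by nra.
have : b ^+ 2 <= Rb ^+ 2 by nra.
nra.
Qed.
Lemma bdd_int d (T : measurableType d) (R : realType)
  (mu : {finite_measure set T -> \bar R}) (D : set T) (f : T -> R) (M : R) :
  measurable D -> measurable_fun setT f -> (forall x, `|f x| <= M) ->
  mu.-integrable D (EFin \o f).
Proof.
move=> mD mf fM; apply/integrableP; split.
  by apply/measurable_EFinP; exact: measurable_funTS.
apply: (@le_lt_trans _ _ (\int[mu]_(x in D) M%:E)%E).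
  apply: ge0_le_integral => //=.
  - apply: measurableT_comp => //; apply: measurableT_comp => //.
    exact: measurable_funTS.
  - by move=> x _; rewrite lee_fin fM.
rewrite integral_cst// ltey_eq fin_numM//; exact: fin_num_measure.
Qed.

Lemma bdd_fin d (T : measurableType d) (R : realType)
  (mu : {finite_measure set T -> \bar R}) (D : set T) (f : T -> R) (M : R) :
  measurable D -> measurable_fun setT f -> (forall x, `|f x| <= M) ->
  (\int[mu]_(x in D) (f x)%:E)%E \is a fin_num.
Proof. by move=> mD mf fM; apply: integrable_fin_num => //; exact: (bdd_int _ _ _ mu D f M mD mf fM). Qed.

Lemma finE (R : realType) (x : \bar R) : x \is a fin_num -> x = (fine x)%:E.
Proof. by move=> h; rewrite fineK. Qed.

Local Open Scope ereal_scope.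

Lemma KL d (T : measurableType d) (R : realType)
  (mu0 mu1 : {finite_measure set T -> \bar R}) (phi : T -> R) (M : R) :
  measurable_fun setT phi -> (forall x, 0 <= phi x <= M)%R ->
  exists E, measurable E /\
    \int[mu0]_x (phi x)%:E - \int[mu1]_x (phi x)%:E <= M%:E * (mu0 E - mu1 E).
Proof.
move=> mphi phiM.
pose nu := cadd (charge_of_finite_measure mu0) (copp (charge_of_finite_measure mu1)).
have [Pp [Nn [[mP posP] [mN negN] PNT PN0]]] := Hahn_decomposition nu.
exists Pp; split => //.
have nuE X : nu X = mu0 X - mu1 X by [].
have bphi x : (`|phi x| <= M)%R.
  by have /andP[h1 h2] := phiM x; rewrite ger0_norm.
have bG x : (`|M - phi x| <= M)%R.
  by have /andP[h1 h2] := phiM x; rewrite ger0_norm; lra.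
have mG : measurable_fun setT (fun x => M - phi x)%R.
  by apply: measurable_funB => //.
have split_int (mu : {finite_measure set T -> \bar R}) :
    \int[mu]_x (phi x)%:E = \int[mu]_(x in Pp) (phi x)%:E + \int[mu]_(x in Nn) (phi x)%:E.
  rewrite -PNT ge0_integral_setU //.
  - by apply/measurable_EFinP; exact: measurable_funTS.
  - by move=> x _; rewrite lee_fin; have /andP[] := phiM x.
  - by rewrite disj_set2E PN0.
have subG (mu : {finite_measure set T -> \bar R}) :
    \int[mu]_(x in Pp) (M - phi x)%:E = M%:E * mu Pp - \int[mu]_(x in Pp) (phi x)%:E.
  rewrite (_ : (fun x => (M - phi x)%:E) = (fun x => (cst M x)%:E - (phi x)%:E)); last first.
    by apply/funext => x; rewrite EFinB.
  rewrite integralB_EFin //.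
  - by congr (_ - _); exact: (integral_cst mu mP M%:E).
  - exact: finite_measure_integrable_cst.
  - exact: (bdd_int _ _ _ mu _ _ _ mP mphi bphi).
have hN : \int[mu0]_(x in Nn) (phi x)%:E <= \int[mu1]_(x in Nn) (phi x)%:E.
  rewrite (eq_measure_integral (mrestr mu0 mN)); last first.
    by move=> A mA AN; rewrite -[RHS]/(mu0 (A `&` Nn)) setIidl.
  rewrite [leRHS](eq_measure_integral (mrestr mu1 mN)); last first.
    by move=> A mA AN; rewrite -[RHS]/(mu1 (A `&` Nn)) setIidl.
  apply: ge0_le_measure_integral => //.
  - move=> S mS; rewrite -[leLHS]/(mu0 (S `&` Nn)) -[leRHS]/(mu1 (S `&` Nn)) -sube_le0.
    exact: (negN (S `&` Nn) (measurableI _ _ mS mN) (@subIsetr _ _ _)).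
  - by move=> x; rewrite lee_fin; have /andP[] := phiM x.
  - by apply/measurable_EFinP.
have hP : \int[mu1]_(x in Pp) (M - phi x)%:E <= \int[mu0]_(x in Pp) (M - phi x)%:E.
  rewrite [leRHS](eq_measure_integral (mrestr mu0 mP)); last first.
    by move=> A mA AN; rewrite -[RHS]/(mu0 (A `&` Pp)) setIidl.
  rewrite [leLHS](eq_measure_integral (mrestr mu1 mP)); last first.
    by move=> A mA AN; rewrite -[RHS]/(mu1 (A `&` Pp)) setIidl.
  apply: ge0_le_measure_integral => //.
  - move=> S mS; rewrite -[leLHS]/(mu1 (S `&` Pp)) -[leRHS]/(mu0 (S `&` Pp)) -sube_ge0; last by rewrite fin_num_measure//; exact: measurableI.
    exact: (posP (S `&` Pp) (measurableI _ _ mS mP) (@subIsetr _ _ _)).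
  - by move=> x; rewrite lee_fin; have /andP[] := phiM x; lra.
  - by apply/measurable_EFinP.
move: hP hN; rewrite !subG !split_int.
rewrite (finE _ _ (bdd_fin _ _ _ mu0 _ _ _ mP mphi bphi)) (finE _ _ (bdd_fin _ _ _ mu0 _ _ _ mN mphi bphi)).
rewrite (finE _ _ (bdd_fin _ _ _ mu1 _ _ _ mP mphi bphi)) (finE _ _ (bdd_fin _ _ _ mu1 _ _ _ mN mphi bphi)).
rewrite (finE _ _ (fin_num_measure mu0 _ mP)) (finE _ _ (fin_num_measure mu1 _ mP)).
rewrite -?EFinM -?EFinD -?EFinB !lee_fin => h1 h2.
rewrite mulrBr; lra.
Qed.

Section pfw.
Context d1 d2 (T1 : measurableType d1) (T2 : measurableType d2) (R : realType).
Variables (mu : {finite_measure set T1 -> \bar R}) (f : T1 -> T2).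
Definition pfw (mf : measurable_fun setT f) := pushforward mu f.
Variable mf : measurable_fun setT f.
Let p0 : pfw mf set0 = 0. Proof. by rewrite /pfw /pushforward preimage_set0 measure0. Qed.
Let pge0 S : 0 <= pfw mf S.
Proof. exact: (measure_ge0 (pushforward mu f : {measure set T2 -> \bar R})). Qed.
Let psa : semi_sigma_additive (pfw mf).
Proof.
move=> F mF tF mUF; rewrite /pfw /pushforward preimage_bigcup.
apply: measure_semi_sigma_additive.
- by move=> n; rewrite -[X in measurable X]setTI; exact: mf.
- apply/trivIsetP => /= i j _ _ ij; rewrite -preimage_setI.
  by move/trivIsetP : tF => /(_ _ _ _ _ ij) ->//; rewrite preimage_set0.
- by rewrite -preimage_bigcup -[X in measurable X]setTI; exact: mf.
Qed.
HB.instance Definition _ := isMeasure.Build _ _ _ (pfw mf) p0 pge0 psa.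
Let pfin : fin_num_fun (pfw mf).
Proof.
move=> S mS; rewrite /pfw /pushforward; apply: fin_num_measure.
by rewrite -[X in measurable X]setTI; exact: mf.
Qed.
HB.instance Definition _ := Measure_isFinite.Build _ _ _ (pfw mf) pfin.
End pfw.

Section condm.
Context (R : realType) d (T : measurableType d) (P : probability T R).
Variables (A : T -> bool).
Definition condm (mA : measurable_fun setT A) (a : bool) := cond_distr P A a.
Variables (mA : measurable_fun setT A) (a : bool).
Let mSa : measurable (A @^-1` [set a]).
Proof. by rewrite -[X in measurable X]setTI; exact: mA. Qed.
Let c_ge0 : (0 <= (fine (P (A @^-1` [set a])))^-1)%R.
Proof. by rewrite invr_ge0 fine_ge0. Qed.
Let cE : condm mA a = mscale (NngNum c_ge0) (mrestr P mSa).
Proof. by apply/funext => E; rewrite /condm /cond_distr /mscale /mrestr/= muleC. Qed.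
Let c0 : condm mA a set0 = 0. Proof. by rewrite cE measure0. Qed.
Let cge0 S : 0 <= condm mA a S.
Proof. by rewrite cE measure_ge0. Qed.
Let csa : semi_sigma_additive (condm mA a).
Proof. by rewrite cE; exact: measure_semi_sigma_additive. Qed.
HB.instance Definition _ := isMeasure.Build _ _ _ (condm mA a) c0 cge0 csa.
Let cfin : fin_num_fun (condm mA a).
Proof.
move=> S mS; rewrite cE /mscale fin_numM//.
change (P (S `&` A @^-1` [set a]) \is a fin_num).
by apply: fin_num_measure; exact: measurableI.
Qed.
HB.instance Definition _ := Measure_isFinite.Build _ _ _ (condm mA a) cfin.

Lemma condm_setT : (0 < P (A @^-1` [set a]))%E -> condm mA a setT = 1.
Proof.
move=> hp; rewrite /condm /cond_distr setTI.
have hf : P (A @^-1` [set a]) \is a fin_num by rewrite fin_num_measure.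
rewrite -[X in X * _](fineK hf) -EFinM mulfV //.
by apply: lt0r_neq0; rewrite -lte_fin fineK.
Qed.
End condm.

Lemma Adv_ub (R : realType) n (L0 L1 : {finite_measure set (n.-tuple R) -> \bar R})
  (E : set (n.-tuple R)) : measurable E -> `|L1 E - L0 E| <= Adv L0 L1.
Proof.
move=> mE; apply: ereal_sup_ubound => /=.
exists (fun z => `[< E z >]).
  apply: (measurable_fun_bool true).
  rewrite setTI (_ : _ @^-1` _ = E) //.
  by apply/seteqP; split => z /=; [move/asboolP | move=> Ez; apply/asboolP].
rewrite (_ : _ @^-1` _ = E) //.
by apply/seteqP; split => z /=; [move/asboolP | move=> Ez; apply/asboolP].
Qed.

Lemma W1_Adv (R : realType) (n : nat) (Zs : set (n.-tuple R)) (Rb : R)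
  (L0 L1 : {finite_measure set (n.-tuple R) -> \bar R}) (z0 : n.-tuple R) :
  Zs z0 -> (forall z, Zs z -> enorm z <= Rb)%R ->
  (forall (u v : n.-tuple R -> R) (c B : R), measurable_fun setT u ->
     measurable_fun setT v -> (forall z, Zs z -> `|u z| <= B)%R ->
     (forall z, Zs z -> u z = v z + c)%R ->
     \int[L0]_z (u z)%:E = \int[L0]_z (v z)%:E + c%:E /\
     \int[L1]_z (u z)%:E = \int[L1]_z (v z)%:E + c%:E) ->
  W1 Zs L0 L1 <= (2 * Rb)%:E * Adv L0 L1.
Proof.
move=> Zz0 hRb Hs.
apply: ge_ereal_sup => _ [f [mf Lf] <-].
have Rb0 : (0 <= Rb)%R by apply: le_trans (hRb _ Zz0); exact: enorm_ge0.
have fd z w : Zs z -> Zs w -> (`|f z - f w| <= 2 * Rb)%R.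
  move=> Zz Zw; apply: le_trans (Lf _ _ Zz Zw) _.
  by rewrite mul1r; apply: edist_le; apply: hRb.
set S := [set f z | z in Zs].
have lbS : has_lbound S.
  exists (f z0 - 2 * Rb)%R => _ [z Zz <-].
  by have := fd z0 z Zz0 Zz; rewrite ler_norml => /andP[_ ?]; lra.
have neS : S !=set0 by exists (f z0); exists z0.
set m := inf S.
have m_le z : Zs z -> (m <= f z)%R.
  by move=> Zz; apply: ge_inf => //; exists z.
have le_m z : Zs z -> (f z - 2 * Rb <= m)%R.
  move=> Zz; apply: lb_le_inf => // _ [w Zw <-].
  by have := fd z w Zz Zw; rewrite ler_norml => /andP[_ ?]; lra.
pose phi := ((fun z => f z - m)%R \max cst 0%R) \min cst (2 * Rb)%R.
have mphi : measurable_fun setT phi.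
  apply: measurable_minr => //; apply: measurable_maxr => //.
  exact: measurable_funB.
have phiE z : Zs z -> phi z = (f z - m)%R.
  move=> Zz; have := m_le z Zz; have := le_m z Zz => h1 h2.
  rewrite /phi /= (_ : Num.max (f z - m) 0 = f z - m)%R; last first.
    by apply/max_idPl; lra.
  by apply/min_idPl; lra.
have phiB z : (0 <= phi z <= 2 * Rb)%R.
  rewrite /phi /=; apply/andP; split.
    by rewrite le_min le_max lexx orbT /=; lra.
  by rewrite ge_min lexx orbT.
have phiN z : (`|phi z| <= 2 * Rb)%R.
  by have /andP[? ?] := phiB z; rewrite ger0_norm.
have fB z : Zs z -> (`|f z| <= `|f z0| + 2 * Rb)%R.
  move=> Zz; have := fd z z0 Zz Zz0; have := ler_normD (f z - f z0)%R (f z0).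
  rewrite subrK; lra.
have fE z : Zs z -> (f z = phi z + m)%R by move=> Zz; rewrite phiE //; lra.
have [e0 e1] := Hs f phi m (`|f z0| + 2 * Rb)%R mf mphi fB fE.
have [E [mE k1]] := KL _ _ _ L0 L1 _ _ mphi phiB.
have [E' [mE' k2]] := KL _ _ _ L1 L0 _ _ mphi phiB.
have a1 := Adv_ub _ _ L0 L1 _ mE; have a2 := Adv_ub _ _ L0 L1 _ mE'.
move: k1 k2 a1 a2; rewrite e0 e1.
rewrite (finE _ _ (bdd_fin _ _ _ L0 _ _ _ measurableT mphi phiN)).
rewrite (finE _ _ (bdd_fin _ _ _ L1 _ _ _ measurableT mphi phiN)).
rewrite (finE _ _ (fin_num_measure L0 _ mE)) (finE _ _ (fin_num_measure L1 _ mE)).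
rewrite (finE _ _ (fin_num_measure L0 _ mE')) (finE _ _ (fin_num_measure L1 _ mE')).
set J0 := fine _; set J1 := fine _; set l0 := fine (L0 E); set l1 := fine (L1 E).
set l0' := fine (L0 E'); set l1' := fine (L1 E').
rewrite -?EFinD -?EFinB -?EFinM !lee_fin /= => k1 k2 a1 a2.
have H1 : (2 * Rb * (l0 - l1))%:E <= (2 * Rb)%:E * Adv L0 L1.
  rewrite EFinM; apply: lee_wpmul2l; first by rewrite lee_fin; lra.
  by apply: le_trans a1; rewrite lee_fin distrC; exact: ler_norm.
have H2 : (2 * Rb * (l1' - l0'))%:E <= (2 * Rb)%:E * Adv L0 L1.
  rewrite EFinM; apply: lee_wpmul2l; first by rewrite lee_fin; lra.
  by apply: le_trans a2; rewrite lee_fin; exact: ler_norm.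
rewrite (_ : (J0 + m - (J1 + m) = J0 - J1)%R); last by lra.
have [h|h] := leP 0%R (J0 - J1)%R.
  by rewrite ger0_norm //; apply: le_trans H1; rewrite lee_fin; lra.
by rewrite ltr0_norm //; apply: le_trans H2; rewrite lee_fin; lra.
Qed.

Lemma xent_ge (R : realType) (p : R) (y : bool) :
  (0 <= p <= 1)%R -> (`|(y%:R - p)%R|)%:E <= xent p y.
Proof.
move=> /andP[p0 p1]; case: y; rewrite /xent /=.
- case: ifPn => hp; last by rewrite leey.
  rewrite lee_fin ger0_norm; last lra.
  have := @le_ln1Dx R (p - 1)%R ltac:(lra).
  rewrite addrC subrK; lra.
- case: ifPn => hp; last by rewrite leey.
  rewrite lee_fin sub0r normrN ger0_norm //.
  have := @le_ln1Dx R (- p)%R ltac:(lra).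
  lra.
Qed.

Lemma xent_meas d (T : measurableType d) (R : realType) (u : T -> R) (v : T -> bool) :
  measurable_fun setT u -> measurable_fun setT v ->
  measurable_fun setT (fun w => xent (u w) (v w)).
Proof.
move=> mu mv; rewrite /xent.
apply: measurable_fun_ifT => //.
- apply: measurable_fun_ifT.
  + by apply: (measurable_fun_ltr (f := fun=> 0%R)).
  + apply/measurable_EFinP; apply: measurableT_comp => //.
    apply: measurableT_comp => //; exact: measurable_ln.
  + exact: measurable_cst.
- apply: measurable_fun_ifT.
  + by apply: (measurable_fun_ltr (g := fun=> 1%R)).
  + apply/measurable_EFinP; apply: measurableT_comp => //.
    apply: (measurableT_comp (f := @ln R) (g := fun w => 1 - u w)%R).
      exact: measurable_ln.
    exact: measurable_funB.
  + exact: measurable_cst.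
Qed.

Local Close Scope ereal_scope.
Local Open Scope ring_scope.

Theorem theorem1 (R : realType)
  (dO : measure_display) (Omega : measurableType dO) (P : probability Omega R)
  (dX : measure_display) (TX : measurableType dX)
  (X : Omega -> TX) (A Y : Omega -> bool)
  (mX : measurable_fun setT X) (mA : measurable_fun setT A)
  (mY : measurable_fun setT Y)
  (hA0 : (0 < P (A @^-1` [set false]) < 1)%E)
  (n : nat) (Zs : set (n.-tuple R)) (Rb : R)
  (g : TX -> n.-tuple R) (mg : measurable_fun setT g)
  (gZ : forall x, Zs (g x))
  (hRb : forall z, Zs z -> enorm z <= Rb)
  (C : R) (h : n.-tuple R -> R) (mh : measurable_fun setT h)
  (h01 : forall z, Zs z -> 0 <= h z <= 1)
  (hC0 : 0 <= C) (hC : lipschitz_with Zs C h) :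
  let D := cond_distr P A in
  let law := fun a => pushforward (D a) (g \o X) in
  let eps := fun a => (\int[D a]_w xent (h (g (X w))) (Y w))%E in
  let PrY1 := fun a => fine (D a (Y @^-1` [set true])) in
  let delta := `|PrY1 false - PrY1 true| in
  (delta%:E - C%:E * W1 Zs (law false) (law true) <= eps false + eps true)%E /\
  ((delta%:E - (2 * Rb * C)%:E * Adv (law false) (law true))
     <= delta%:E - C%:E * W1 Zs (law false) (law true))%E.
Proof.
move=> D law eps PrY1 delta.
have mSa a : measurable (A @^-1` [set a]).
  by rewrite -[X in measurable X]setTI; exact: mA.
have hp0 : (0 < P (A @^-1` [set false]))%E by case/andP: hA0.
have hp1 : (0 < P (A @^-1` [set true]))%E.
  have -> : A @^-1` [set true] = ~` (A @^-1` [set false]).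
    by apply/seteqP; split => w /=; case: (A w).
  rewrite probability_setC //.
  have hf : P (A @^-1` [set false]) \is a fin_num by rewrite fin_num_measure.
  case/andP: hA0 => _; rewrite -(fineK hf) -EFinB !lte_fin subr_gt0.
  by [].
pose Dm a := condm _ _ _ P A mA a.
have DmT a : Dm a setT = 1%E by apply: (condm_setT _ _ _ P A mA a); case: a.
have mF : measurable_fun setT (g \o X) := measurableT_comp mg mX.
pose Lm a := pfw _ _ _ _ _ (Dm a) (g \o X) mF.
have [w0 _] : [set: Omega] !=set0.
  apply/set0P/eqP => h0; have := probability_setT P; rewrite h0 measure0 => /eqP.
  by rewrite eq_sym; apply/negP; rewrite eqe oner_eq0.
pose z0 := g (X w0); have Zz0 : Zs z0 := gZ (X w0).
have mYr : measurable_fun setT (fun w => ((Y w)%:R : R)).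
  by apply: (measurableT_comp (f := fun b : bool => (b%:R : R))) => //.
pose F := g \o X.
have intB a (u : Omega -> R) (B : R) : measurable_fun setT u ->
    (forall w, `|u w| <= B) -> (Dm a).-integrable setT (EFin \o u).
  by move=> mu uB; exact: (bdd_int _ _ _ (Dm a) setT u B measurableT mu uB).
have lawE a (u : n.-tuple R -> R) (B : R) : measurable_fun setT u ->
    (forall z, Zs z -> `|u z| <= B) ->
    (\int[pushforward (Dm a) F]_z (u z)%:E = \int[Dm a]_w (u (F w))%:E)%E.
  move=> mu uB.
  rewrite (@integral_pushforward _ _ _ _ _ F mF (Dm a) setT (EFin \o u)) //.
  - exact/measurable_EFinP.
  - rewrite preimage_setT; apply: (intB a (u \o F) B).
      exact: measurableT_comp.
    by move=> w; apply: uB; exact: gZ.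
have Hs a (u v : n.-tuple R -> R) (c B : R) : measurable_fun setT u ->
     measurable_fun setT v -> (forall z, Zs z -> `|u z| <= B) ->
     (forall z, Zs z -> u z = v z + c) ->
     (\int[Lm a]_z (u z)%:E = \int[Lm a]_z (v z)%:E + c%:E)%E.
  move=> mu mv uB uv.
  have vB z : Zs z -> `|v z| <= B + `|c|.
    move=> Zz; have := ler_normB (u z) c; have := uB z Zz.
    by rewrite (_ : u z - c = v z); [lra | rewrite uv // addrK].
  rewrite /Lm /pfw (lawE a u B mu uB) (lawE a v _ mv vB).
  rewrite (eq_integral (fun w => (v (F w))%:E + c%:E))%E; last first.
    by move=> w _; rewrite uv ?EFinD //; exact: gZ.
  rewrite (@integralD_EFin _ _ _ (Dm a) setT measurableT (fun w => v (F w)) (fun=> c)).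
  - by rewrite (integral_cst (Dm a) measurableT c%:E) -[X in (_ * X)%E]/(Dm a setT) DmT mule1.
  - apply: (intB a _ (B + `|c|)); first exact: measurableT_comp.
    by move=> w; apply: vB; exact: gZ.
  - by apply: (intB a _ `|c|); [exact: measurable_cst | move=> w].
have W := W1_Adv R n Zs Rb (Lm false) (Lm true) z0 Zz0 hRb
  (fun u v c B mu mv uB uv => conj (Hs false u v c B mu mv uB uv) (Hs true u v c B mu mv uB uv)).
have W' : (C%:E * W1 Zs (law false) (law true) <= (2 * Rb * C)%:E * Adv (law false) (law true))%E.
  rewrite [(2 * Rb * C)%R]mulrC EFinM -muleA.
  by apply: lee_wpmul2l; [rewrite lee_fin | exact: W].
split; last by apply: leeB.
pose hF w := h (F w).
have hF01 w : 0 <= hF w <= 1 := h01 _ (gZ (X w)).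
have hFB w : `|hF w| <= 1 by case/andP: (hF01 w) => ? ?; rewrite ger0_norm.
have mhF : measurable_fun setT hF := measurableT_comp mh mF.
pose q a := fine (\int[Dm a]_w (hF w)%:E)%E.
have qE a : (\int[Dm a]_w (hF w)%:E)%E = (q a)%:E.
  by rewrite fineK // (bdd_fin _ _ _ (Dm a) setT hF 1 measurableT mhF hFB).
have YB w : `|((Y w)%:R : R)| <= 1 by case: (Y w); rewrite ?normr1 ?normr0.
have mY1 : measurable (Y @^-1` [set true]).
  by rewrite -[X in measurable X]setTI; exact: mY.
have pE a : Dm a (Y @^-1` [set true]) = (\int[Dm a]_w ((Y w)%:R)%:E)%E.
  transitivity (\int[Dm a]_w (\1_(Y @^-1` [set true]) w)%:E)%E.
    by rewrite integral_indic // setIT.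
  apply: eq_integral => w _; rewrite indicE; case Yw: (Y w).
    by rewrite (mem_set (Yw : (Y @^-1` [set true]) w)).
  by rewrite memNset //= Yw.
have claimA a : (`|PrY1 a - q a|%:E <= eps a)%E.
  have -> : PrY1 a = fine (Dm a (Y @^-1` [set true])) by [].
  rewrite pE.
  have fY : (\int[Dm a]_w ((Y w)%:R)%:E)%E \is a fin_num.
    exact: (bdd_fin _ _ _ (Dm a) setT _ 1 measurableT mYr YB).
  have e : ((fine (\int[Dm a]_w ((Y w)%:R)%:E) - q a)%:E =
      \int[Dm a]_w (((Y w)%:R - hF w)%R)%:E)%E.
    rewrite integralB_EFin //.
    - by rewrite EFinB fineK // qE.
    - exact: (intB a _ 1).
    - exact: (intB a _ 1).
  rewrite -abse_EFin e.
  apply: le_trans (le_abse_integral _ measurableT _) _.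
    by apply/measurable_EFinP; exact: measurable_funB.
  rewrite /eps.
  apply: ge0_le_integral => //.
  - apply: measurableT_comp => //; apply/measurable_EFinP; exact: measurable_funB.
  - exact: xent_meas.
  - by move=> w _; rewrite abse_EFin; exact: xent_ge.
have claimB : (`|q false - q true|%:E <= C%:E * W1 Zs (law false) (law true))%E.
  move: hC0; rewrite le_eqVlt => /predU1P[C0|Cpos].
    have hc w : hF w = h z0.
      have := hC (F w) z0 (gZ _) Zz0; rewrite -C0 mul0r normr_le0 subr_eq0.
      by move/eqP.
    have qc a : q a = h z0.
      rewrite /q (eq_integral (fun=> (h z0)%:E)); last by move=> w _; rewrite hc.
      by rewrite (integral_cst (Dm a) measurableT (h z0)%:E) -[X in (_ * X)%E]/(Dm a setT) DmT mule1.
    by rewrite !qc subrr normr0 -C0 mul0e.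
  pose f z := h z * C^-1.
  have mf : measurable_fun setT f by apply: measurable_funM.
  have Lf : lipschitz_with Zs 1 f.
    move=> z w Zz Zw; rewrite /f -mulrBl normrM (@gtr0_norm _ C^-1) ?invr_gt0 //.
    by rewrite mul1r ler_pdivrMr // mulrC; exact: hC.
  have fB z : Zs z -> `|f z| <= C^-1.
    move=> Zz; rewrite /f normrM (@gtr0_norm _ C^-1) ?invr_gt0 //.
    rewrite ler_pdivrMr ?invr_gt0 // mulVf ?gt_eqF //.
    by have /andP[? ?] := h01 z Zz; rewrite ger0_norm.
  have iE a : (\int[law a]_z (f z)%:E = ((q a) * C^-1)%:E)%E.
    rewrite (lawE a f C^-1 mf fB) /f.
    under eq_integral do rewrite EFinM.
    by rewrite integralZr ?qE -?EFinM //; exact: (intB a _ 1).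
  have hW : (`|(\int[law false]_z (f z)%:E - \int[law true]_z (f z)%:E)%E| <= W1 Zs (law false) (law true))%E.
    by apply: ereal_sup_ubound; exists f.
  rewrite !iE -EFinB abse_EFin in hW.
  have -> : `|q false - q true| = C * `|q false * C^-1 - q true * C^-1|.
    rewrite -mulrBl normrM (@gtr0_norm _ C^-1) ?invr_gt0 // mulrCA mulfV ?mulr1 //.
    by rewrite gt_eqF.
  by rewrite EFinM; apply: lee_wpmul2l => //; rewrite lee_fin ltW.
have tri : delta <= `|PrY1 false - q false| + `|q false - q true| + `|PrY1 true - q true|.
  rewrite /delta; set a0 := PrY1 false; set a1 := PrY1 true.
  have -> : a0 - a1 = (a0 - q false) + (q false - q true) - (a1 - q true) by lra.
  apply: le_trans (ler_normB _ _) _; apply: lerD => //; exact: ler_normD.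
have K0 : (0 <= C%:E * W1 Zs (law false) (law true))%E.
  by apply: le_trans claimB; rewrite lee_fin.
move: claimB (claimA false) (claimA true) K0.
set K := (C%:E * W1 Zs (law false) (law true))%E.
case: K => [k| |] // hk e0 e1 k0.
  rewrite -EFinB; apply: le_trans (leeD e0 e1); rewrite -EFinD lee_fin.
  by move: hk; rewrite lee_fin; lra.
by rewrite /= leNye.
Qed.
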